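(* Let $V$ be a real vector space of dimension $n$ and $1\le k\le n-1$. Let $E\subseteq V$ be a subspace, $A\subseteq \mathrm{Ann}(E)$ a subspace, and $\varepsilon: E\to \wedge^k V^*/A$ a linear map which is $E$-skew. Then $$L(E,A,\varepsilon)=\{X+\alpha \mid X\in E,\ \alpha + A=\varepsilon(X)\}\subseteq V\oplus \wedge^kV^*$$ is isotropic. Conversely, every isotropic subspace $L\subseteq V\oplus\wedge^kV^*$ is of the form $L(E,A_L,\varepsilon)$ with $E=\mathrm{pr}_1(L)$, $A_L=L\cap\wedge^kV^*$, and $\varepsilon:E\to\wedge^kV^*/A_L$ defined by $\varepsilon(X)=\alpha+A_L$ whenever $X+\alpha\in L$ (this $\varepsilon$ being well defined, linear and $E$-skew).
   Context: On $V\oplus\wedge^kV^*$ consider the symmetric $\wedge^{k-1}V^*$-valued pairing $\langle X+\alpha,Y+\beta\rangle=i_X\beta+i_Y\alpha$. For a subspace $L$, $L^\perp$ is its orthogonal with respect to this pairing, and $L$ is isotropic if $L\subseteq L^\perp$. $\mathrm{pr}_1,\mathrm{pr}_2$ denote the projections to $V$ and $\wedge^kV^*$. For $E\subseteq V$, $\mathrm{Ann}(E)=\{\alpha\in\wedge^kV^*\mid i_Y\alpha=0\ \forall Y\in E\}$. For $A\subseteq\mathrm{Ann}(E)$, let $\iota_E:\wedge^kV^*/A\to E^*\otimes\wedge^{k-1}V^*$, $\alpha+A\mapsto (X\mapsto i_X\alpha)$. A linear map $\varepsilon:E\to\wedge^kV^*/A$ is called $E$-skew if $\iota_E\circ\varepsilon\in\wedge^2E^*\otimes\wedge^{k-1}V^*$,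 i.e. $i_Y(\varepsilon(X))=-i_X(\varepsilon(Y))$ for all $X,Y\in E$. *)

(* Defs.v *)
From mathcomp Require Import all_boot all_algebra.
From mathcomp Require Export reals.
Set Implicit Arguments. Unset Strict Implicit. Unset Printing Implicit Defensive.
Import GRing.Theory.
Local Open Scope ring_scope.

Definition Vsp (R : realType) (n : nat) := 'rV[R]_n.

(* Exterior forms on V, in coordinates: a form is the family of its coefficients
   alpha(J) on the basis e^J = e^{j_1} /\ ... /\ e^{j_m} (j_1 < ... < j_m),
   indexed by all subsets J of 'I_n. *)
Definition kform (R : realType) (n : nat) := {ffun {set 'I_n} -> R^o}.

Definition isform (R : realType) (n k : nat) (a : kform R n) : Prop :=
  forall J : {set 'I_n}, #|J| != k -> a J = 0.

(* interior product i_X alpha : for alpha = e^J, J = {j_1<...<j_k},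
   i_X e^J = sum_m (-1)^(m-1) X_{j_m} e^{J \ j_m}. *)
Definition contract (R : realType) (n : nat) (X : Vsp R n) (a : kform R n) : kform R n :=
  [ffun S : {set 'I_n} =>
     \sum_(j < n | j \notin S) X 0 j * (-1) ^+ #|[set i in S | (i < j)%N]| * a (j |: S)].

(* The ambient space V (+) wedge^k V^* is modelled inside Vsp * form; a subset
   lives in V (+) wedge^k V^* when all second components are k-forms. *)
Definition amb (R : realType) (n : nat) := (Vsp R n * kform R n)%type.

Definition in_amb (R : realType) (n k : nat) (L : amb R n -> Prop) : Prop :=
  forall u, L u -> isform k u.2.

Definition subspace (R : realType) (T : lmodType R) (S : T -> Prop) : Prop :=
  S 0 /\ forall (a : R) (x y : T), S x -> S y -> S (a *: x + y).

Definition pairing (R : realType) (n : nat) (u v : amb R n) : kform R n :=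
  contract u.1 v.2 + contract v.1 u.2.

Definition perp (R : realType) (n k : nat) (L : amb R n -> Prop) : amb R n -> Prop :=
  fun u => isform k u.2 /\ forall v, L v -> pairing u v = 0.

Definition isotropic (R : realType) (n k : nat) (L : amb R n -> Prop) : Prop :=
  forall u, L u -> perp k L u.

Definition pr1 (R : realType) (n : nat) (L : amb R n -> Prop) : Vsp R n -> Prop :=
  fun X => exists a, L (X, a).

Definition Acap (R : realType) (n : nat) (L : amb R n -> Prop) : kform R n -> Prop :=
  fun a => L (0, a).

Definition Ann (R : realType) (n k : nat) (E : Vsp R n -> Prop) : kform R n -> Prop :=
  fun a => isform k a /\ forall Y, E Y -> contract Y a = 0.

(* A linear map eps : E -> wedge^k V^*/A is represented by a function
   eps : V -> form (its values on E being representatives of the cosets):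
   values on E are k-forms, and X |-> eps X + A is linear on E. *)
Definition qlinear (R : realType) (n k : nat) (E : Vsp R n -> Prop)
    (A : kform R n -> Prop) (eps : Vsp R n -> kform R n) : Prop :=
  (forall X, E X -> isform k (eps X)) /\
  forall (c : R) X Y, E X -> E Y -> A (eps (c *: X + Y) - (c *: eps X + eps Y)).

(* E-skew: i_Y (eps X) = - i_X (eps Y) for X, Y in E (independent of the
   representatives since A is contained in Ann(E)). *)
Definition Eskew (R : realType) (n : nat) (E : Vsp R n -> Prop)
    (eps : Vsp R n -> kform R n) : Prop :=
  forall X Y, E X -> E Y -> contract Y (eps X) = - contract X (eps Y).

Definition Lset (R : realType) (n : nat) (E : Vsp R n -> Prop)
    (A : kform R n -> Prop) (eps : Vsp R n -> kform R n) : amb R n -> Prop :=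
  fun u => E u.1 /\ A (u.2 - eps u.1).

(* Main.v *)
Require Import Defs.
From mathcomp Require Import all_boot all_algebra.
From mathcomp Require Import boolp.
Import GRing.Theory.
Local Open Scope ring_scope.

Section Aux.
Variables (R : realType) (n : nat).

Lemma pairE (x y : amb R n) (c : R) :
  c *: x + y = (c *: x.1 + y.1, c *: x.2 + y.2).
Proof. by case: x; case: y. Qed.

Lemma contractD (X : Vsp R n) (a b : kform R n) :
  contract X (a + b) = contract X a + contract X b.
Proof.
apply/ffunP => S; rewrite !ffunE -big_split /=.
by apply: eq_bigr => j _; rewrite ffunE mulrDr.
Qed.

Lemma contract0l (b : kform R n) : contract 0 b = 0.
Proof.
apply/ffunP => S; rewrite !ffunE big1 // => j _.
by rewrite mxE !mul0r.
Qed.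

Lemma isformD k (a b : kform R n) : isform k a -> isform k b -> isform k (a + b).
Proof. by move=> Ha Hb J HJ; rewrite ffunE Ha // Hb // addr0. Qed.

End Aux.

Theorem proposition3p2 (R : realType) (n k : nat) :
  (1 <= k <= n - 1)%N ->
  (forall (E : Vsp R n -> Prop) (A : kform R n -> Prop) (eps : Vsp R n -> kform R n),
      subspace E -> subspace A -> (forall a, A a -> Ann k E a) ->
      qlinear k E A eps -> Eskew E eps ->
      isotropic k (Lset E A eps))
  /\
  (forall L : amb R n -> Prop,
      subspace L -> in_amb k L -> isotropic k L ->
      [/\ subspace (pr1 L) /\ subspace (Acap L),
          (forall a, Acap L a -> Ann k (pr1 L) a),
          (* eps(X) = alpha + A_L whenever X + alpha in L is well defined *)
          (forall X a b, L (X, a) -> L (X, b) -> Acap L (a - b)),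
          (* a representative of eps exists *)
          (exists eps : Vsp R n -> kform R n, forall X, pr1 L X -> L (X, eps X)) &
          (* any representative is linear, E-skew, and L = L(E, A_L, eps) *)
          forall eps : Vsp R n -> kform R n,
            (forall X, pr1 L X -> L (X, eps X)) ->
            [/\ qlinear k (pr1 L) (Acap L) eps, Eskew (pr1 L) eps &
                forall u, L u <-> Lset (pr1 L) (Acap L) eps u]]).
Proof.
move=> _; split.
  move=> E A eps sE sA AAnn [epsF epsL] sk [X al] [/= EX AX]; split => /=.
    have -> : al = (al - eps X) + eps X by rewrite subrK.
    apply: isformD; [exact: (AAnn _ AX).1 | exact: epsF].
  move=> [Y be] [/= EY AY]; rewrite /pairing /=.
  have -> : be = (be - eps Y) + eps Y by rewrite subrK.
  have -> : al = (al - eps X) + eps X by rewrite subrK.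
  move: (be - eps Y) (al - eps X) AY AX => b a AY AX.
  rewrite !contractD ((AAnn _ AX).2 _ EY) ((AAnn _ AY).2 _ EX) !add0r.
  by rewrite (sk _ _ EX EY); apply: subrr.
move=> L [L0 LS] inL iso.
have wd : forall X a b, L (X, a) -> L (X, b) -> Acap L (a - b).
  move=> X a b La Lb; have := LS (-1) _ _ Lb La; rewrite pairE /=.
  by rewrite !scaleN1r addNr addrC.
have sub1 : subspace (pr1 L).
  split; first by exists 0.
  move=> c X Y [a La] [b Lb]; exists (c *: a + b).
  by have := LS c _ _ La Lb; rewrite pairE.
have sub2 : subspace (Acap L).
  split; first by [].
  move=> c a b La Lb; have := LS c _ _ La Lb; rewrite pairE /=.
  by rewrite scaler0 addr0.
have ann : forall a, Acap L a -> Ann k (pr1 L) a.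
  move=> a La; split; first exact: (inL _ La).
  move=> Y [b Lb]; have := (iso _ La).2 _ Lb.
  by rewrite /pairing /= contract0l add0r.
split => //.
  have : forall X, exists e, pr1 L X -> L (X, e).
    move=> X; case: (pselect (pr1 L X)) => [[a La]|nX]; first by exists a => _.
    by exists 0 => /nX.
  by case/choice => f Hf; exists f.
move=> eps Heps; split.
- split; first by move=> X /Heps /inL.
  move=> c X Y EX EY; apply: (wd (c *: X + Y)).
    by apply: Heps; exact: sub1.2.
  by have := LS c _ _ (Heps _ EX) (Heps _ EY); rewrite pairE.
- move=> X Y EX EY; have := (iso _ (Heps _ EX)).2 _ (Heps _ EY).
  rewrite /pairing /= => /eqP; rewrite addrC addr_eq0 => /eqP; apply.
- move=> [X al]; split.
    move=> La; have EX : pr1 L X by exists al.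
    by split => //=; apply: wd La (Heps _ EX).
  move=> [/= EX Aa]; have := LS 1 _ _ Aa (Heps _ EX); rewrite pairE /=.
  by rewrite !scale1r add0r subrK.
Qed.
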